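(* If $n\ge 0$ is an integer such that $\deg_t\bigl(B_{n+1}(t)-B_n(t)\bigr)=1$, then $n=1$, and $B_2(t)-B_1(t)=t-1$.
   Context: The Stern polynomials $B_n(t)\in\mathbb{Z}[t]$, $n\ge 0$, are defined by $B_0(t)=0$, $B_1(t)=1$, $B_{2n}(t)=tB_n(t)$ and $B_{2n+1}(t)=B_n(t)+B_{n+1}(t)$ for $n\ge 1$. *)

(* Defs.v *)
From mathcomp Require Import all_boot all_order all_algebra.
Set Implicit Arguments. Unset Strict Implicit. Unset Printing Implicit Defensive.
Import GRing.Theory.
Local Open Scope ring_scope.

(* Stern polynomials B_n(t) in Z[t]:
   B_0 = 0, B_1 = 1, B_{2n} = t B_n, B_{2n+1} = B_n + B_{n+1} (n >= 1).
   Defined by fuel-bounded recursion; fuel n suffices for index n. *)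
Fixpoint stern_aux (k n : nat) : {poly int} :=
  match k with
  | 0%N => 0
  | k'.+1 =>
    if n == 0%N then 0
    else if n == 1%N then 1
    else if odd n then stern_aux k' n./2 + stern_aux k' (n./2).+1
    else 'X * stern_aux k' n./2
  end.

Definition stern (n : nat) : {poly int} := stern_aux n n.

Definition degt (p : {poly int}) : nat := (size p).-1.

(* Main.v *)
Require Import Defs.
From mathcomp Require Import all_boot all_order all_algebra.
From Stdlib Require Import Lia.
Import GRing.Theory.
Local Open Scope ring_scope.

Lemma half_facts n : n = (odd n + n./2 + n./2)%N.
Proof. by rewrite -addnA addnn odd_double_half. Qed.

Lemma saS k n : stern_aux k.+1 n =
  if n == 0%N then 0
  else if n == 1%N then 1
  else if odd n then stern_aux k n./2 + stern_aux k (n./2).+1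
  else 'X * stern_aux k n./2.
Proof. by []. Qed.

Lemma fuel_step k n : (n <= k)%N -> stern_aux k.+1 n = stern_aux k n.
Proof.
elim: k n => [|k IH] n Hn.
  by move: Hn; rewrite leqn0 => /eqP ->.
rewrite saS [RHS]saS.
case: (n == 0%N) / eqP => [//|n0]; case: (n == 1%N) / eqP => [//|n1].
have E := half_facts n.
have h2 : (n./2 <= k)%N.
  move/leP: Hn => Hn; apply/leP; case: (odd n) E => /= E; rewrite -?plusE in E; lia.
case: ifP => on.
  have h3 : ((n./2).+1 <= k)%N.
    move/leP: Hn => Hn; apply/leP; rewrite on /= -?plusE in E; lia.
  by rewrite !IH.
by rewrite IH.
Qed.

Lemma fuel k n : (n <= k)%N -> stern_aux k n = stern n.
Proof.
move=> H; rewrite -(subnK H); elim: (k - n)%N => [|d IH]; first by rewrite add0n.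
by rewrite addSn fuel_step ?IH // leq_addl.
Qed.

Lemma stern_even m : stern (m.+1).*2 = 'X * stern m.+1.
Proof.
rewrite /stern doubleS saS.
have -> : (m.*2.+2 == 0%N) = false by [].
have -> : (m.*2.+2 == 1%N) = false by [].
have -> : odd m.*2.+2 = false by rewrite /= negbK odd_double.
rewrite -doubleS doubleK fuel //.
by rewrite -addnn; apply/leP; rewrite -?plusE; lia.
Qed.

Lemma stern_odd m : stern (m.+1).*2.+1 = stern m.+1 + stern m.+2.
Proof.
rewrite /stern doubleS saS.
have -> : (m.*2.+3 == 0%N) = false by [].
have -> : (m.*2.+3 == 1%N) = false by [].
have -> : odd m.*2.+3 = true by rewrite /= negbK odd_double.
have h1 : ((m.+1).*2.+1)./2 = m.+1 by rewrite /= uphalf_double.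
rewrite -doubleS h1 !fuel //.
  by rewrite -addnn; apply/leP; rewrite -?plusE; lia.
by rewrite -addnn; apply/leP; rewrite -?plusE; lia.
Qed.
Lemma sind (P : nat -> Prop) : P 0%N -> P 1%N ->
  (forall m, P m.+1 -> P (m.+1).*2) ->
  (forall m, P m.+1 -> P m.+2 -> P (m.+1).*2.+1) -> forall n, P n.
Proof.
move=> H0 H1 He Ho n; elim/ltn_ind: n => n IH.
case: n IH => [|[|n]] IH //.
have E := half_facts n.+2.
case Eh: (n.+2)./2 E => [|j] E; first by case: (odd _) E.
case: (odd n.+2) E => /= E.
  have -> : n.+2 = (j.+1).*2.+1 by rewrite E -addnA addnn.
  rewrite -?plusE in E.
  apply: Ho; apply: IH; apply/leP; lia.
have -> : n.+2 = (j.+1).*2 by rewrite E add0n addnn.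
rewrite -?plusE in E.
apply: He; apply: IH; apply/leP; lia.
Qed.

Lemma ev0 n : (stern n).[0] = (odd n)%:R.
Proof.
elim/sind: n => [|||m IH1 IH2]; rewrite ?hornerE //.
  by move=> m _; rewrite stern_even hornerM hornerX mul0r odd_double.
rewrite stern_odd hornerD IH1 IH2 /= odd_double /=.
by case: (odd m).
Qed.

Lemma ev2 n : (stern n).[2] = n%:R :> int.
Proof.
elim/sind: n => [|||m IH1 IH2]; rewrite ?hornerE //.
  by move=> m IH; rewrite stern_even hornerM hornerX IH -muln2 natrM mulrC.
rewrite stern_odd hornerD IH1 IH2 -addn1 -muln2 -natrD; congr (_%:R).
by rewrite -?plusE -?multE; lia.
Qed.

Lemma ev1 n : (0 < n)%N -> 0 < (stern n).[1] :> int.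
Proof.
elim/sind: n => [|||m IH1 IH2]; rewrite ?hornerE //.
  by move=> m IH _; rewrite stern_even hornerM hornerX mul1r IH.
move=> _; rewrite stern_odd hornerD; apply: Num.Theory.addr_gt0; [exact: IH1 | exact: IH2].
Qed.

Theorem theorem5p4 (n : nat) :
  degt (stern n.+1 - stern n) = 1%N ->
  n = 1%N /\ stern 2 - stern 1 = 'X - 1.
Proof.
move=> H.
have fin : stern 2 - stern 1 = 'X - 1.
  by rewrite (stern_even 0) /stern /= mulr1.
split=> //.
set D := stern n.+1 - stern n in H.
have sD : size D = 2%N by move: H; rewrite /degt; case: (size D) => [|[|[|]]].
have hx x : D.[x] = D`_0 + D`_1 * x.
  by rewrite horner_coef sD !big_ord_recr big_ord0 /= expr0 expr1 mulr1 add0r.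
have b0 : D`_1 != 0.
  have : lead_coef D != 0 by rewrite lead_coef_eq0 -size_poly_eq0 sD.
  by rewrite lead_coefE sD.
have e2 : D.[2] = 1 by rewrite /D hornerD hornerN !ev2 -natr1 addrAC subrr add0r.
have e0 : D.[0] = (odd n.+1)%:R - (odd n)%:R by rewrite /D hornerD hornerN !ev0.
rewrite hx in e2; rewrite hx mulr0 addr0 in e0.
move: e0; rewrite [odd n.+1]/=; case On: (odd n) => /= e0.
- rewrite e0 in e2.
  have E := odd_double_half n; rewrite On /= in E.
  have b1 : D`_1 = 1.
    have : (D`_1 - 1) * 2 == 0.
      rewrite add0r in e2; rewrite mulrBl mul1r subr_eq0.
      by apply/eqP; rewrite -(addNKr 1 (D`_1*2)) e2.
    by rewrite mulf_eq0 orbF subr_eq0 => /eqP.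
  have e1 : D.[1] = 0 by rewrite hx mulr1 e0 b1 add0r addNr.
  move: E; case Eh: n./2 => [|k] E; first by rewrite -E.
  exfalso; move: e1; rewrite /D -E hornerD hornerN -doubleS stern_even stern_odd.
  rewrite hornerM hornerX mul1r hornerD opprD addrCA subrr addr0 => /eqP.
  by rewrite oppr_eq0 => /eqP Z; have := @ev1 k.+1 (ltn0Sn k); rewrite Z.
- rewrite e0 subr0 in e2; move/eqP: e2.
  by rewrite -subr_eq0 addrC addKr mulf_eq0 (negbTE b0).
Qed.
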